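(* Let $\mathbf{B}=\mathbf{B}_+\,\dot\cup\,\mathbf{B}'\in\dot{\mathbb{P}}(\mathbb{L}(\mathbf{C}))$ with $|\mathbf{B}|=|\mathbf{C}|$, and suppose every $L\in\mathbf{B}_+$ has a positive monotonic effect on $D$ relative to $\mathbf{C}$. If for some tree $\mathfrak{T}$ on $\mathbf{B}_+$ and some $\omega^*\in\Omega$ $$D_{\mathbf{B}=\mathbf{1}}(\omega^* )-\sum_{L\in\mathbf{B}_+}D_{\mathbf{B}\setminus\{L\}=\mathbf{1},L=0}(\omega^* )-\sum_{\varnothing\neq\widetilde{\mathbf{B}}\subseteq\mathbf{B}'}D_{\mathbf{B}\setminus\widetilde{\mathbf{B}}=\mathbf{1},\widetilde{\mathbf{B}}=\mathbf{0}}(\omega^* )+\sum_{\mathbf{E}\in\mathfrak{T}}D_{\mathbf{B}\setminus\mathbf{E}=\mathbf{1},\mathbf{E}=\mathbf{0}}(\omega^* )>0,$$ then $\mathbf{B}$ is singular for $\mathcal{D}(\mathbf{C},\Omega)$.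
   Context: Events are binary random variables on a population $\Omega$; $\overline{X}=1-X$; $\mathbb{L}(\mathbf{C})=\mathbf{C}\cup\{\overline{X}:X\in\mathbf{C}\}$; $\dot{\mathbb{P}}(\mathbb{L}(\mathbf{C}))$ is the set of subsets of $\mathbb{L}(\mathbf{C})$ not containing both $X$ and $\overline{X}$; $(L)_{\mathbf{c}}$ is the value of literal $L$ under assignment $\mathbf{c}$; $\bigwedge(\mathbf{B})=\min_{L\in\mathbf{B}}L$. Potential outcomes $D_{\mathbf{c}}(\omega)\in\{0,1\}$. Since $|\mathbf{B}|=|\mathbf{C}|$, values of the literals of $\mathbf{B}$ determine an assignment to $\mathbf{C}$; $D_{\mathbf{B}\setminus\widetilde{\mathbf{B}}=\mathbf{1},\widetilde{\mathbf{B}}=\mathbf{0}}$ sets the literals in $\widetilde{\mathbf{B}}$ to 0 and the rest of $\mathbf{B}$ to 1. A literal $L$ has a positive monotonic effect on $D$ relative to $\mathbf{C}$ if for all $\omega$ and all assignments $\mathbf{c},\mathbf{c}'$ differing only in the variable underlying $L$ with $(L)_{\mathbf{c}}=1,(L)_{\mathbf{c}'}=0$, $D_{\mathbf{c}}(\omega)\ge D_{\mathbf{c}'}(\omega)$. A tree on a finite set $\mathbf{S}$ is a set $\mathfrak{T}$ of 2-element subsets of $\mathbf{S}$ with $|\mathfrak{T}|=|\mathbf{S}|-1$ connecting all elements (empty if $|\mathbf{S}|\le1$). $\mathbf{B}$ is a sufficient cause for $D$ relative to $\mathbf{C}$ for $\omega^*$ if some $\mathbf{c}^*$ has $(\bigwedge(\mathbf{B}))_{\mathbf{c}^*}=1$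 and $D_{\mathbf{c}}(\omega^* )=1$ whenever $(\bigwedge(\mathbf{B}))_{\mathbf{c}}=1$; minimal if no proper subset is such; singular for $\omega^*$ if minimal and no other $\mathbf{B}'\in\dot{\mathbb{P}}(\mathbb{L}(\mathbf{C}))$ is a minimal sufficient cause for $\omega^*$; singular for $\mathcal{D}(\mathbf{C},\Omega)$ if singular for some $\omega^*\in\Omega$. *)

(* Defs.v *)
From mathcomp Require Import all_boot all_order all_algebra.
Set Implicit Arguments. Unset Strict Implicit. Unset Printing Implicit Defensive.
Import GRing.Theory Num.Theory.

(* Variables (the events in C) are indexed by a finite type V.
   A literal is a pair (x, b): b = true stands for X = x, b = false for its
   complement (1 - X). *)

Definition litval (V : finType) (L : V * bool) (c : {ffun V -> bool}) : bool :=
  if L.2 then c L.1 else ~~ c L.1.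

(* B belongs to \dot{P}(L(C)): it does not contain both X and its complement *)
Definition consistent (V : finType) (B : {set V * bool}) : bool :=
  [forall x : V, ~~ (((x, true) \in B) && ((x, false) \in B))].

(* /\(B) evaluated at the assignment c (min over literals; empty min = 1) *)
Definition conjB (V : finType) (B : {set V * bool}) (c : {ffun V -> bool}) : bool :=
  [forall L in B, litval L c].

(* The assignment "B \ Bt = 1, Bt = 0" (for B consistent with |B| = |C|,
   B holds exactly one literal per variable): literals of B in Bt are set to 0,
   the other literals of B to 1. *)
Definition setB (V : finType) (B Bt : {set V * bool}) : {ffun V -> bool} :=
  [ffun x => if (x, true) \in B then (x, true) \notin Bt else (x, false) \in Bt].

Definition pos_monotonic (V : finType) (Omega : Type)
  (D : Omega -> {ffun V -> bool} -> bool) (L : V * bool) : Prop :=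
  forall (w : Omega) (c c' : {ffun V -> bool}),
    (forall y, y != L.1 -> c y = c' y) ->
    litval L c -> ~~ litval L c' -> (D w c' <= D w c)%N.

Definition is_tree (A : finType) (S : {set A}) (T : {set {set A}}) : Prop :=
  [/\ (forall E, E \in T -> (E \subset S) && (#|E| == 2)),
      #|T| = (#|S| - 1)%N &
      (forall x y, x \in S -> y \in S ->
         connect (fun a b => [set a; b] \in T) x y)].

Definition sufficient (V : finType) (Omega : Type)
  (D : Omega -> {ffun V -> bool} -> bool) (B : {set V * bool}) (w : Omega) : Prop :=
  (exists c, conjB B c) /\ (forall c, conjB B c -> D w c).

Definition minimal_sufficient (V : finType) (Omega : Type)
  (D : Omega -> {ffun V -> bool} -> bool) (B : {set V * bool}) (w : Omega) : Prop :=
  sufficient D B w /\ (forall B0 : {set V * bool}, B0 \proper B -> ~ sufficient D B0 w).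

Definition singular_for (V : finType) (Omega : Type)
  (D : Omega -> {ffun V -> bool} -> bool) (B : {set V * bool}) (w : Omega) : Prop :=
  minimal_sufficient D B w /\
  (forall B' : {set V * bool}, consistent B' -> minimal_sufficient D B' w -> B' = B).

Definition singular (V : finType) (Omega : Type)
  (D : Omega -> {ffun V -> bool} -> bool) (B : {set V * bool}) : Prop :=
  exists w : Omega, singular_for D B w.

Definition Dz (V : finType) (Omega : Type)
  (D : Omega -> {ffun V -> bool} -> bool) (w : Omega) (c : {ffun V -> bool}) : int :=
  Posz (nat_of_bool (D w c)).

(* Main.v *)
Require Import Defs.
From mathcomp Require Import all_boot all_order all_algebra.
From mathcomp Require Import zify.
Import GRing.Theory Num.Theory.
Set Implicit Arguments. Unset Strict Implicit. Unset Printing Implicit Defensive.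

Lemma cons_lit (V : finType) (B : {set V * bool}) x :
  consistent B -> (x, true) \in B -> (x, false) \in B -> False.
Proof. by move=> /forallP /(_ x) /negP H h1 h2; apply: H; rewrite h1 h2. Qed.

Lemma litval_setB (V : finType) (B F : {set V * bool}) L :
  consistent B -> L \in B -> litval L (setB B F) = (L \notin F).
Proof.
case: L => x [] HB HL; rewrite /litval /setB ffunE /=; first by rewrite HL.
case: ifP => h; last by [].
by exfalso; apply: (cons_lit HB h HL).
Qed.

Lemma setB_other (V : finType) (B F F' : {set V * bool}) x :
  (forall b, ((x, b) \in F) = ((x, b) \in F')) -> setB B F x = setB B F' x.
Proof. by move=> H; rewrite /setB !ffunE !H. Qed.

Lemma exB (V : finType) (B : {set V * bool}) :
  consistent B -> #|B| = #|V| -> forall x, exists b, (x, b) \in B.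
Proof.
move=> HB Hc x.
have inj : {in B &, injective (@fst V bool)}.
  move=> [y b] [y' b'] h1 h2 /= e; subst y'.
  case: b b' h1 h2 => [] [] // h1 h2; exfalso.
    exact: (cons_lit HB h1 h2).
  exact: (cons_lit HB h2 h1).
have e : (@fst V bool) @: B = setT.
  apply/eqP; rewrite eqEcard subsetT cardsT (card_in_imset inj) Hc leqnn.
  done.
have : x \in (@fst V bool) @: B by rewrite e inE.
case/imsetP => -[y b] hy /= ->; by exists b.
Qed.

Lemma setB_repr (V : finType) (B : {set V * bool}) :
  consistent B -> (forall x, exists b, (x, b) \in B) ->
  forall c, c = setB B [set L in B | ~~ litval L c].
Proof.
move=> HB ex c; apply/ffunP => x.
case: (ex x) => -[] Hx; rewrite /setB ffunE.
  by rewrite Hx inE Hx /litval /= negbK.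
have nt : (x, true) \notin B by apply/negP => h; exact: (cons_lit HB h Hx).
by rewrite (negbTE nt) inE Hx /litval /= negbK.
Qed.
Lemma path_cross {A : finType} (e : rel A) (S : {set A}) (p : seq A) (x : A) :
  x \notin S -> last x p \in S -> path e x p ->
  exists a b, [/\ e a b, a \notin S & b \in S].
Proof.
elim: p x => [|y p IH] x /= hx hl.
  by rewrite hl in hx.
case/andP=> exy hp.
case hy: (y \in S); first by exists x, y.
by apply: (IH y) => //; rewrite hy.
Qed.

Lemma cross (A : finType) (T : {set {set A}}) (X : {set A}) :
  (forall E, E \in T -> E \subset X) ->
  (forall x y, x \in X -> y \in X -> connect (fun a b => [set a; b] \in T) x y) ->
  forall S : {set A}, S \subset X -> S != set0 ->
  #|X :\: S| <= #|[set E in T | ~~ (E \subset S)]|.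
Proof.
move=> hTX hconn.
have: forall n (S : {set A}), #|X :\: S| = n -> S \subset X -> S != set0 ->
  #|X :\: S| <= #|[set E in T | ~~ (E \subset S)]|; last by move=> H S; exact: H.
elim=> [|n IH] S hn hSX hS0; first by rewrite hn.
have [v hv] : exists v, v \in X :\: S.
  by apply/set0Pn; rewrite -card_gt0 hn.
have [s hs] : exists s, s \in S by apply/set0Pn.
move: (hv); rewrite inE => /andP [hvS hvX].
have := hconn v s hvX (subsetP hSX s hs).
case/connectP=> p hp hlast.
have [a [b [hab haS hbS]]] := @path_cross _ _ S p v hvS (etrans (esym (congr1 (fun z => z \in S) hlast)) hs) hp.
have haX : a \in X by apply: (subsetP (hTX _ hab)); rewrite !inE eqxx.
have hn' : #|X :\: (a |: S)| = n.
  have := cardsD1 a (X :\: S).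
  have -> : a \in X :\: S by rewrite inE haS haX.
  rewrite hn add1n => -[->].
  by apply: eq_card => y; rewrite !inE negb_or andbA [~~ _ && _]andbC.
have hSX' : a |: S \subset X by rewrite subUset sub1set haX hSX.
have hS0' : a |: S != set0 by apply/set0Pn; exists a; rewrite !inE eqxx.
have := IH _ hn' hSX' hS0'.
rewrite hn' hn => hle.
apply: leq_ltn_trans hle _.
apply: proper_card; apply/properP; split.
  apply/subsetP => E; rewrite !inE => /andP [-> hE] /=.
  apply: contra hE => hE; apply: subset_trans hE _; exact: subsetUr.
exists [set a; b]; first by rewrite !inE hab /= subUset !sub1set hbS andbT.
rewrite !inE hab /= negbK subUset !sub1set !inE eqxx hbS orbT //.
Qed.

Lemma mono_step (V : finType) (Omega : Type) (D : Omega -> {ffun V -> bool} -> bool)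
  (B F : {set V * bool}) L w :
  consistent B -> L \in B -> pos_monotonic D L -> L \in F ->
  (D w (setB B F) <= D w (setB B (F :\ L)))%N.
Proof.
move=> HB HL Hm HLF; apply: (Hm w (setB B (F :\ L)) (setB B F)).
- move=> y hy; apply: setB_other => b; rewrite in_setD1.
  have -> : ((y, b) != L) by apply: contraNneq hy => <-.
  by [].
- by rewrite litval_setB // in_setD1 eqxx.
- by rewrite litval_setB // negbK.
Qed.

Lemma key (V : finType) (Omega : Type) (D : Omega -> {ffun V -> bool} -> bool)
  (B Bplus Bprime : {set V * bool}) w :
  consistent B -> Bplus :|: Bprime = B ->
  (forall L, L \in Bplus -> pos_monotonic D L) ->
  (forall L, L \in Bplus -> ~~ D w (setB B [set L])) ->
  (forall Bt : {set V * bool}, Bt \subset Bprime -> Bt != set0 -> ~~ D w (setB B Bt)) ->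
  forall F : {set V * bool}, F \subset B -> F != set0 -> ~~ D w (setB B F).
Proof.
move=> HB HU Hmon Ha HC.
suff H : forall n (F : {set V * bool}), #|F| <= n -> F \subset B -> F != set0 -> ~~ D w (setB B F).
  by move=> F; apply: (H #|F|).
elim=> [|n IH] F hn hFB hF0.
  by move: hF0; rewrite -card_gt0; case: #|F| hn.
case: (pickP (mem (F :&: Bplus))) => [L | none].
  rewrite /= inE => /andP [hLF hLp].
  have hLB : L \in B by rewrite -HU inE hLp.
  case: (eqVneq (F :\ L) set0) => [e | ne].
    have -> : F = [set L] by rewrite -(setD1K hLF) e setU0.
    exact: Ha.
  have := mono_step w HB hLB (Hmon L hLp) hLF.
  have : ~~ D w (setB B (F :\ L)).
    apply: IH => //.
    - by move: hn; rewrite (cardsD1 L F) hLF.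
    - by apply: subset_trans hFB; apply: subsetDl.
  by case: (D w (setB B (F :\ L))); case: (D w (setB B F)).
apply: HC => //.
apply/subsetP => y hy.
have := none y; rewrite /= inE hy /= => hyp.
have : y \in B by apply: (subsetP hFB).
by rewrite -HU inE hyp.
Qed.

Lemma sumPosz (I : finType) (P : pred I) (f : I -> nat) :
  (\sum_(i | P i) (Posz (f i)) = Posz (\sum_(i | P i) f i))%R.
Proof. by rewrite (big_morph Posz PoszD (erefl (Posz 0))). Qed.

Lemma sum_bool_card (I : finType) (P Q : pred I) :
  (\sum_(i | P i) (Q i : nat) = #|[set i | P i && Q i]|)%N.
Proof.
rewrite -sum1_card big_mkcond [RHS]big_mkcond; apply: eq_bigr => i _.
by rewrite inE; case: (P i); case: (Q i).
Qed.

Lemma edge_step (V : finType) (Omega : Type) (D : Omega -> {ffun V -> bool} -> bool)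
  (B Bplus E : {set V * bool}) L w :
  consistent B -> Bplus \subset B ->
  (forall L, L \in Bplus -> pos_monotonic D L) ->
  E \subset Bplus -> #|E| = 2 -> L \in E ->
  D w (setB B E) -> D w (setB B [set L]).
Proof.
move=> HB hsub Hmon hE hc hL hD.
have : #|E :\ L| == 1 by move: hc; rewrite (cardsD1 L E) hL add1n => -[->].
case/cards1P => L' e.
have hL' : L' \in E :\ L by rewrite e inE.
move: (hL'); rewrite in_setD1 => /andP [hne hL'E].
have hL'p : L' \in Bplus by apply: (subsetP hE).
have := mono_step w HB (subsetP hsub _ hL'p) (Hmon L' hL'p) hL'E.
have -> : E :\ L' = [set L].
  apply/setP => y; rewrite in_setD1 -(setD1K hL) e !inE.
  case: (eqVneq y L') => [->|] /=; [by rewrite (negbTE hne) | by rewrite orbF].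

by rewrite hD; case: (D w _).
Qed.

Theorem mainTheorem15 (V : finType) (Omega : Type)
  (D : Omega -> {ffun V -> bool} -> bool)
  (B Bplus Bprime : {set V * bool}) (T : {set {set V * bool}}) (w : Omega) :
  consistent B ->
  Bplus :|: Bprime = B -> [disjoint Bplus & Bprime] ->
  #|B| = #|V| ->
  (forall L, L \in Bplus -> pos_monotonic D L) ->
  is_tree Bplus T ->
  (0 < Dz D w (setB B set0)
       - (\sum_(L in Bplus) Dz D w (setB B [set L]))
       - (\sum_(Bt : {set V * bool} | (Bt \subset Bprime) && (Bt != set0))
            Dz D w (setB B Bt))
       + (\sum_(E in T) Dz D w (setB B E)))%R ->
  singular D B.
Proof.
move=> HB HU Hdisj Hc Hmon [HTE HTc HTconn] Hpos.
have Hsub : Bplus \subset B by rewrite -HU subsetUl.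
have ex := exB HB Hc.
set S := [set L | (L \in Bplus) && D w (setB B [set L])].
have HSp : S \subset Bplus by apply/subsetP => L; rewrite inE => /andP [].
have HTE' : forall E, E \in T -> E \subset Bplus by move=> E /HTE /andP [].
have bS : forall E, E \in T -> D w (setB B E) -> E \subset S.
  move=> E hE hD; apply/subsetP => L hL; rewrite inE.
  have /andP [hEp /eqP h2] := HTE E hE.
  rewrite (subsetP hEp _ hL) /=.
  exact: (edge_step HB Hsub Hmon hEp h2 hL hD).
have Hin : #|[set E : {set V * bool} | (E \in T) && (E \subset S)]| + (0 < #|S|) <= #|S|.
  case: (eqVneq S set0) => [S0|S0].
    rewrite S0 cards0 /= addn0 leqn0 cards_eq0; apply/eqP/setP => E.
    rewrite !inE; apply/negP => /andP [hE hs].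
    move: (HTE E hE) => /andP [_ h2]; move: hs; rewrite subset0 => /eqP e.
    by rewrite e cards0 in h2.
  have hc := cross HTE' HTconn HSp S0.
  have e1 := cardsID [set E : {set V * bool} | E \subset S] T.
  have e2 : T :&: [set E : {set V * bool} | E \subset S] = [set E : {set V * bool} | (E \in T) && (E \subset S)].
    by apply/setP => E; rewrite !inE.
  have e3 : T :\: [set E : {set V * bool} | E \subset S] = [set E : {set V * bool} in T | ~~ (E \subset S)].
    by apply/setP => E; rewrite !inE andbC.
  rewrite e2 e3 in e1.
  have e4 : #|Bplus :\: S| = #|Bplus| - #|S|.
    by rewrite cardsD (setIidPr HSp).
  have e5 : 0 < #|S| by rewrite card_gt0.
  have e6 : #|S| <= #|Bplus| by apply: subset_leq_card.
  rewrite e5 addn1; rewrite e4 in hc; rewrite -e1 in HTc; move: hc HTc e5 e6.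
  move: #|[set E : {set V * bool} in T | ~~ (E \subset S)]| => y.
  move: #|[set E : {set V * bool} in T | E \subset S]| => x.
  move: #|S| #|Bplus| => s b. lia.
have sa : (\sum_(L in Bplus) Dz D w (setB B [set L]) = Posz #|S|)%R.
  by rewrite /Dz sumPosz sum_bool_card.
have sb : (\sum_(E in T) Dz D w (setB B E) <= Posz #|[set E : {set V * bool} | (E \in T) && (E \subset S)]|)%R.
  rewrite /Dz sumPosz -sum_bool_card lez_nat; apply: leq_sum => E hE.
  by case h: (D w _) => //; rewrite (bS E hE h).
rewrite sa in Hpos.
have hCn : (\sum_(Bt : {set V * bool} | (Bt \subset Bprime) && (Bt != set0))
    Dz D w (setB B Bt) = Posz (\sum_(Bt : {set V * bool} | (Bt \subset Bprime) && (Bt != set0))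
    (D w (setB B Bt) : nat)))%R by rewrite /Dz sumPosz.
rewrite hCn in Hpos.
set C := (\sum_(Bt : {set V * bool} | _) (D w (setB B Bt) : nat))%N in Hpos.
set X := (\sum_(E in T) _)%R in Hpos sb.
have hd := leq_b1 (D w (setB B set0)).
have [hd1 hS0 hC0] : [/\ D w (setB B set0), #|S| = 0 & C = 0].
  move: Hin hd sb Hpos. rewrite /Dz.
  case: (D w (setB B set0)) => /=;
  move: X C #|S| #|[set E : {set V * bool} | (E \in T) && (E \subset S)]| => X C s k;
  case: (posnP s) => [->|hs]; rewrite ?hs /=; intros; first [exfalso; lia | split; [done|lia|lia]].
have Ha : forall L, L \in Bplus -> ~~ D w (setB B [set L]).
  move=> L hL; apply/negP => hD.
  have : L \in S by rewrite inE hL hD.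
  by move: hS0 => /eqP; rewrite cards_eq0 => /eqP ->; rewrite inE.
have HC : forall Bt : {set V * bool}, Bt \subset Bprime -> Bt != set0 -> ~~ D w (setB B Bt).
  move=> Bt h1 h2; move: hC0 => /eqP; rewrite /C sum_nat_eq0 => /forallP /(_ Bt).
  by rewrite h1 h2 /=; case: (D w _).
have K := key HB HU Hmon Ha HC.
have Hc0 : forall c, D w c -> c = setB B set0.
  move=> c hc; have E := setB_repr HB ex c.
  set F := [set L in B | ~~ litval L c] in E.
  case: (eqVneq F set0) => [F0|F0]; first by rewrite E F0.
  have : F \subset B by apply/subsetP => L; rewrite inE => /andP [].
  by move/K/(_ F0); rewrite -E hc.
have flipL : forall L, L \in B -> setB B [set L] != setB B set0.
  move=> L hL; apply/eqP => e.
  have := @litval_setB _ B [set L] L HB hL.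
  by rewrite e litval_setB // !inE eqxx.
exists w; split.
- split.
  + split.
      exists (setB B set0); apply/forallP => L; apply/implyP => hL.
      by rewrite litval_setB // inE.
    move=> c hc; rewrite (setB_repr HB ex c).
    have -> : [set L in B | ~~ litval L c] = set0.
      apply/setP => L; rewrite !inE; case hL: (L \in B) => //=.
      by have := forallP hc L; rewrite hL /= => ->.
    exact: hd1.
  + move=> B0 /properP [sub [L hLB hLn]] [_ Hs].
    have hcj : conjB B0 (setB B [set L]).
      apply/forallP => L0; apply/implyP => h0.
      rewrite litval_setB ?(subsetP sub _ h0) // inE.
      by apply: contraNneq hLn => <-.
    by move/eqP: (flipL L hLB); apply; apply: Hc0; apply: Hs.
move=> B' _ [[[c hc] Hs] _].
have ec := Hc0 c (Hs c hc); rewrite ec in hc.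
have sub1 : B' \subset B.
  apply/subsetP => -[x b] hL.
  have hv : litval (x, b) (setB B set0) by have := forallP hc (x, b); rewrite hL.
  case: (ex x) => b0 hb0.
  have hv0 : litval (x, b0) (setB B set0) by rewrite litval_setB // inE.
  suff e : b = b0 by rewrite e.
  move: hv hv0; rewrite /litval /=.
  by clear hL hb0; case: b; case: b0 => //=; case: (setB B set0 x).
apply/eqP; rewrite eqEsubset sub1 /=.
apply/subsetP => L hL; apply/negPn/negP => hn.
have : conjB B' (setB B [set L]).
  apply/forallP => L0; apply/implyP => h0.
  rewrite litval_setB ?(subsetP sub1 _ h0) // inE.
  by apply: contraNneq hn => <-.
move/Hs/Hc0 => e.
by move/eqP: (flipL L hL).
Qed.
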